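(* Let $a_0\geq1$ and $a_1,a_2,\dots$ be positive integers such that $a_{2k}\leq 3a_0-2$ for all $k\geq1$. Let $\ell=[a_0;a_1,a_2,\dots]$ (an irrational number) and $\theta=e^{2/\ell}$. Then $\mathcal A_\theta=\emptyset$.
   Context: $\lfloor x\rfloor$ is the floor of $x$; $\log$ is the natural logarithm. For real $\theta>1$ and positive integer $n$, $M'_\theta(n)=\left\lfloor 1/(\theta^{1/n}-1)\right\rfloor$, and $\mathcal A_\theta=\{n\in\mathbb N: M'_\theta(n)\neq \lfloor n/\log\theta-1/2\rfloor\}$, where $\mathbb N$ is the set of positive integers. $[a_0;a_1,a_2,\dots]$ denotes an infinite simple continued fraction. *)

(* Defs.v *)
From Stdlib Require Import Reals ZArith Lra Lia.
Open Scope R_scope.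

(* floor of a real number: up x is the unique integer with x < up x <= x + 1 *)
Definition Rfloor (x : R) : Z := (up x - 1)%Z.

Definition Mprime (theta : R) (n : nat) : Z :=
  Rfloor (/ (Rpower theta (/ INR n) - 1)).

Definition in_A (theta : R) (n : nat) : Prop :=
  (1 <= n)%nat /\ Mprime theta n <> Rfloor (INR n / ln theta - / 2).

Fixpoint cf_tail (a : nat -> nat) (k m : nat) : R :=
  match m with
  | O => INR (a k)
  | S m' => INR (a k) + / cf_tail a (S k) m'
  end.

Definition convergent (a : nat -> nat) (n : nat) : R := cf_tail a 0 n.

Definition cf_value (a : nat -> nat) (l : R) : Prop := Un_cv (convergent a) l.

(* Main.v *)
Require Import Defs.
From Stdlib Require Import Reals ZArith Lra Lia Psatz.
From Coquelicot Require Import Coquelicot.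
Open Scope R_scope.

Fixpoint Qf (a : nat -> nat) (j : nat) : Z :=
  match j with
  | O => 0%Z
  | S j' => match j' with O => 1%Z | S j'' => (Z.of_nat (a j') * Qf a j' + Qf a j'')%Z end
  end.
Fixpoint Pf (a : nat -> nat) (j : nat) : Z :=
  match j with
  | O => 1%Z
  | S j' => match j' with O => Z.of_nat (a 0%nat) | S j'' => (Z.of_nat (a j') * Pf a j' + Pf a j'')%Z end
  end.

Definition sgn (j : nat) : Z := if Nat.even j then 1%Z else (-1)%Z.

Section Conv.
Variable a : nat -> nat.
Hypothesis hapos : forall k : nat, (1 <= a k)%nat.

Lemma Q_rec j : Qf a (S (S j)) = (Z.of_nat (a (S j)) * Qf a (S j) + Qf a j)%Z.
Proof. reflexivity. Qed.
Lemma P_rec j : Pf a (S (S j)) = (Z.of_nat (a (S j)) * Pf a (S j) + Pf a j)%Z.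
Proof. reflexivity. Qed.

Lemma Q_props : forall j, (0 <= Qf a j /\ 1 <= Qf a (S j) /\ Qf a j <= Qf a (S j))%Z.
Proof.
  induction j as [|j [H1 [H2 H3]]].
  - simpl; lia.
  - rewrite Q_rec. pose proof (hapos (S j)). split; [lia|]. nia.
Qed.

Lemma Q_grow : forall j, (Z.of_nat j <= Qf a (S (2 * j)))%Z.
Proof.
  induction j as [|j IH].
  - simpl; lia.
  - replace (S (2 * S j)) with (S (S (S (2 * j)))) by lia.
    rewrite Q_rec. pose proof (hapos (S (S (2*j)))). pose proof (Q_props (S (2*j))). nia.
Qed.

Lemma find_j (n : Z) : (1 <= n)%Z ->
  exists j, (1 <= j)%nat /\ (Qf a j <= n < Qf a (S j))%Z.
Proof.
  intros Hn.
  assert (H: forall m, (n < Qf a (S m))%Z -> exists j, (1 <= j)%nat /\ (Qf a j <= n < Qf a (S j))%Z).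
  { induction m as [|m IH]; intros Hm.
    - simpl in Hm; lia.
    - destruct (Z_lt_le_dec n (Qf a (S m))) as [h|h].
      + now apply IH.
      + exists (S m); split; [lia|]; lia. }
  apply (H (2 * S (Z.to_nat n))%nat). pose proof (Q_grow (S (Z.to_nat n))). lia.
Qed.

Lemma det j : (Pf a (S j) * Qf a j - Pf a j * Qf a (S j))%Z = (- sgn j)%Z.
Proof.
  induction j as [|j IH].
  - unfold sgn; simpl; lia.
  - rewrite P_rec, Q_rec.
    replace ((Z.of_nat (a (S j)) * Pf a (S j) + Pf a j) * Qf a (S j) -
      Pf a (S j) * (Z.of_nat (a (S j)) * Qf a (S j) + Qf a j))%Z
      with (- (Pf a (S j) * Qf a j - Pf a j * Qf a (S j)))%Z by ring.
    rewrite IH. unfold sgn in *. rewrite Nat.even_succ, <- Nat.negb_even.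
    destruct (Nat.even j); simpl in *; lia.
Qed.


Lemma a_ge1 k : 1 <= INR (a k).
Proof. apply (le_INR 1). apply hapos. Qed.

Lemma tail_bounds : forall m k, INR (a k) <= cf_tail a k m <= INR (a k) + 1.
Proof.
  induction m as [|m IH]; intros k; simpl.
  - lra.
  - destruct (IH (S k)) as [H1 H2]. pose proof (a_ge1 (S k)).
    assert (0 < / cf_tail a (S k) m) by (apply Rinv_0_lt_compat; lra).
    assert (/ cf_tail a (S k) m <= 1).
    { rewrite <- Rinv_1. apply Rinv_le_contravar; lra. }
    lra.
Qed.

Lemma tail_lower m k : INR (a k) + / (INR (a (S k)) + 1) <= cf_tail a k (S m).
Proof.
  simpl. destruct (tail_bounds m (S k)) as [H1 H2]. pose proof (a_ge1 (S k)).
  apply Rplus_le_compat_l. apply Rinv_le_contravar; lra.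
Qed.

Fixpoint zeta (l : R) (k : nat) : R :=
  match k with O => l | S k => / (zeta l k - INR (a k)) end.

Lemma cv_const c : Un_cv (fun _ => c) c.
Proof. intros e He. exists O. intros. unfold Rdist. rewrite Rminus_diag, Rabs_R0. lra. Qed.

Lemma zeta_cv l : Un_cv (fun m => cf_tail a 0 m) l ->
  forall k, Un_cv (fun m => cf_tail a k m) (zeta l k) /\ INR (a k) < zeta l k.
Proof.
  intros hl. induction k as [|k [IHc IHl]].
  - split; [exact hl|]. simpl.
    assert (H: INR (a 0) + / (INR (a 1) + 1) <= l).
    { apply (@Rle_cv_lim (fun _ => INR (a 0) + / (INR (a 1) + 1)) (fun m => cf_tail a 0 (S m))).
      - intros; apply tail_lower.
      - apply cv_const.
      - apply (CV_shift' (fun m => cf_tail a 0 m) 1) in hl.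
        eapply Un_cv_ext; [|exact hl]. intros n; simpl; now rewrite Nat.add_1_r. }
    pose proof (a_ge1 1). assert (0 < / (INR (a 1) + 1)) by (apply Rinv_0_lt_compat; lra). lra.
  - assert (Hc : Un_cv (fun m => cf_tail a (S k) m) (zeta l (S k))).
    { apply (CV_shift' (fun m => cf_tail a k m) 1) in IHc.
      assert (Hcont : continuity_pt (fun t => / (t - INR (a k))) (zeta l k)).
      { reg. lra. }
      pose proof (continuity_seq _ _ _ Hcont IHc) as H.
      eapply Un_cv_ext; [|exact H]. intros n. simpl. rewrite Nat.add_1_r. simpl.
      replace (INR (a k) + / cf_tail a (S k) n - INR (a k)) with (/ cf_tail a (S k) n) by ring.
      rewrite Rinv_inv. reflexivity. }
    split; [exact Hc|].
    assert (H: INR (a (S k)) + / (INR (a (S (S k))) + 1) <= zeta l (S k)).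
    { apply (@Rle_cv_lim (fun _ => INR (a (S k)) + / (INR (a (S (S k))) + 1)) (fun m => cf_tail a (S k) (S m))).
      - intros; apply tail_lower.
      - apply cv_const.
      - apply (CV_shift' (fun m => cf_tail a (S k) m) 1) in Hc.
        eapply Un_cv_ext; [|exact Hc]. intros n; simpl; now rewrite Nat.add_1_r. }
    pose proof (a_ge1 (S (S k))). assert (0 < / (INR (a (S (S k))) + 1)) by (apply Rinv_0_lt_compat; lra). lra.
Qed.

Variable l : R.
Hypothesis hl : Un_cv (fun m => cf_tail a 0 m) l.

Notation z := (zeta l).

Lemma z_gt k : INR (a k) < z k.
Proof. exact (proj2 (zeta_cv l hl k)). Qed.

Lemma z_pos k : 0 < z k.
Proof. pose proof (z_gt k); pose proof (a_ge1 k); lra. Qed.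

Lemma z_rec k : z k = INR (a k) + / z (S k).
Proof. simpl. rewrite Rinv_inv. ring. Qed.

Lemma z_lt k : z k < INR (a k) + 1.
Proof.
  rewrite z_rec. pose proof (z_gt (S k)); pose proof (a_ge1 (S k)).
  apply Rplus_lt_compat_l. rewrite <- Rinv_1. apply Rinv_lt_contravar; lra.
Qed.

Lemma IZR_Q_rec j : IZR (Qf a (S (S j))) = INR (a (S j)) * IZR (Qf a (S j)) + IZR (Qf a j).
Proof. rewrite Q_rec, plus_IZR, mult_IZR, <- INR_IZR_INZ. reflexivity. Qed.
Lemma IZR_P_rec j : IZR (Pf a (S (S j))) = INR (a (S j)) * IZR (Pf a (S j)) + IZR (Pf a j).
Proof. rewrite P_rec, plus_IZR, mult_IZR, <- INR_IZR_INZ. reflexivity. Qed.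

Lemma ident j : l * (IZR (Qf a (S j)) * z (S j) + IZR (Qf a j)) = IZR (Pf a (S j)) * z (S j) + IZR (Pf a j).
Proof.
  induction j as [|j IH].
  - simpl (IZR (Qf a 1)); simpl (IZR (Qf a 0)); simpl (Pf a 1); simpl (IZR (Pf a 0)).
    rewrite <- INR_IZR_INZ.
    assert (H : l = INR (a 0) + / z 1) by (pose proof (z_rec 0) as h; exact h).
    pose proof (z_pos 1). set (z1 := z 1) in *. clearbody z1. subst l. field. lra.
  - rewrite IZR_Q_rec, IZR_P_rec. rewrite (z_rec (S j)) in IH.
    pose proof (z_pos (S (S j))) as hz.
    set (w := z (S (S j))) in *.
    apply (Rmult_eq_compat_r w) in IH.
    replace (l * (IZR (Qf a (S j)) * (INR (a (S j)) + / w) + IZR (Qf a j)) * w)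
      with (l * ((INR (a (S j)) * IZR (Qf a (S j)) + IZR (Qf a j)) * w + IZR (Qf a (S j)))) in IH
      by (field; lra).
    replace ((IZR (Pf a (S j)) * (INR (a (S j)) + / w) + IZR (Pf a j)) * w)
      with ((INR (a (S j)) * IZR (Pf a (S j)) + IZR (Pf a j)) * w + IZR (Pf a (S j))) in IH
      by (field; lra).
    exact IH.
Qed.

Definition e j := IZR (Qf a j) * l - IZR (Pf a j).

Lemma e_sign j : e (S j) * (IZR (Qf a (S j)) * z (S j) + IZR (Qf a j)) = IZR (sgn j).
Proof.
  unfold e. pose proof (ident j) as H. pose proof (det j) as D.
  apply (f_equal IZR) in D. rewrite minus_IZR, !mult_IZR, opp_IZR in D.
  transitivity (IZR (Qf a (S j)) * (l * (IZR (Qf a (S j)) * z (S j) + IZR (Qf a j)))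
     - IZR (Pf a (S j)) * (IZR (Qf a (S j)) * z (S j) + IZR (Qf a j))); [ring|].
  rewrite H. lra.
Qed.

Lemma den_pos j : 0 < IZR (Qf a (S j)) * z (S j) + IZR (Qf a j).
Proof.
  destruct (Q_props j) as [h1 [h2 h3]]. apply IZR_le in h1. apply IZR_le in h2.
  pose proof (z_pos (S j)). nra.
Qed.

Lemma e_pos_even j : Nat.even j = true -> 0 < e (S j).
Proof.
  intros He. pose proof (e_sign j) as H. unfold sgn in H; rewrite He in H.
  pose proof (den_pos j). destruct (Rlt_le_dec 0 (e (S j))); [auto|nra].
Qed.

Lemma e_neg_odd j : Nat.even j = false -> e (S j) < 0.
Proof.
  intros He. pose proof (e_sign j) as H. unfold sgn in H; rewrite He in H.
  pose proof (den_pos j). destruct (Rlt_le_dec (e (S j)) 0); [auto|nra].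
Qed.

Lemma e_opp j : e (S j) * e (S (S j)) < 0.
Proof.
  destruct (Nat.even j) eqn:E.
  - pose proof (e_pos_even j E). assert (Nat.even (S j) = false) by (rewrite Nat.even_succ, <- Nat.negb_even, E; reflexivity).
    pose proof (e_neg_odd (S j) H0). nra.
  - pose proof (e_neg_odd j E). assert (Nat.even (S j) = true) by (rewrite Nat.even_succ, <- Nat.negb_even, E; reflexivity).
    pose proof (e_pos_even (S j) H0). nra.
Qed.

Lemma abs_int_ge1 (x : Z) : x <> 0%Z -> 1 <= Rabs (IZR x).
Proof.
  intros H. destruct (Z_lt_le_dec 0 x) as [h|h].
  - rewrite Rabs_pos_eq; [|apply IZR_le; lia]. apply IZR_le; lia.
  - rewrite Rabs_left; [|apply IZR_lt; lia]. rewrite <- opp_IZR. apply IZR_le; lia.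
Qed.

Lemma abs_sum_same (u v : R) : 0 <= u * v -> Rabs u <= Rabs (u + v).
Proof.
  intros H. unfold Rabs; destruct (Rcase_abs u); destruct (Rcase_abs (u+v)); nra.
Qed.

Lemma best_approx i (n p : Z) : (1 <= i)%nat -> (1 <= n)%Z -> (n < Qf a (S i))%Z ->
  Rabs (e i) <= Rabs (IZR n * l - IZR p).
Proof.
  intros Hi Hn Hlt.
  set (D := (Pf a (S i) * Qf a i - Pf a i * Qf a (S i))%Z).
  assert (HD : (D * D = 1)%Z).
  { unfold D. rewrite det. unfold sgn. destruct (Nat.even i); lia. }
  set (x := (D * (n * Pf a (S i) - p * Qf a (S i)))%Z).
  set (y := (D * (p * Qf a i - n * Pf a i))%Z).
  assert (En : n = (x * Qf a i + y * Qf a (S i))%Z).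
  { transitivity (D * D * n)%Z; [rewrite HD; ring|]. unfold x, y, D; ring. }
  assert (Ep : p = (x * Pf a i + y * Pf a (S i))%Z).
  { transitivity (D * D * p)%Z; [rewrite HD; ring|]. unfold x, y, D; ring. }
  assert (Er : IZR n * l - IZR p = IZR x * e i + IZR y * e (S i)).
  { rewrite En, Ep. unfold e. rewrite !plus_IZR, !mult_IZR. ring. }
  rewrite Er. clearbody x y.
  destruct i as [|j]; [lia|].
  pose proof (e_opp j) as Hop.
  destruct (Q_props (S j)) as [q1 [q2 q3]].
  destruct (Q_props j) as [q4 [q5 q6]].
  destruct (Z.eq_dec y 0) as [Hy|Hy].
  - subst y. rewrite Rmult_0_l, Rplus_0_r, Rabs_mult.
    assert (x <> 0%Z) by (intro; subst; lia).
    pose proof (abs_int_ge1 x H). pose proof (Rabs_pos (e (S j))). nra.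
  - destruct (Z.eq_dec x 0) as [Hx|Hx].
    + exfalso. subst x. nia.
    + assert (Hxy : (x * y < 0)%Z) by nia.
      apply IZR_lt in Hxy. rewrite mult_IZR in Hxy.
      eapply Rle_trans; [|apply abs_sum_same; nra].
      rewrite Rabs_mult. pose proof (abs_int_ge1 x Hx). pose proof (Rabs_pos (e (S j))). nra.
Qed.


Hypothesis heven : forall k : nat, (1 <= k)%nat -> (a (2 * k) <= 3 * a 0 - 2)%nat.

Lemma dioph (n p : Z) : (1 <= n)%Z -> IZR n * l < IZR p ->
  1 <= 3 * INR (a 0) * (IZR n * (IZR p - IZR n * l)).
Proof.
  intros Hn Hp.
  destruct (Rle_lt_dec 1 (3 * INR (a 0) * (IZR n * (IZR p - IZR n * l)))) as [ok|H]; [exact ok|exfalso].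
  pose proof (a_ge1 0) as HA.
  set (A := INR (a 0)) in *.
  set (t := IZR p - IZR n * l) in *.
  assert (Ht : 0 < t) by (unfold t; lra).
  assert (Hnr : 1 <= IZR n) by (apply IZR_le; lia).
  assert (Hnt : IZR n * t < / 3).
  { apply (Rmult_lt_reg_l 3); [lra|]. rewrite Rinv_r by lra. nra. }
  destruct (find_j n Hn) as [i [Hi [Hq1 Hq2]]].
  pose proof (best_approx i n p Hi Hn Hq2) as BA.
  replace (IZR n * l - IZR p) with (- t) in BA by (unfold t; ring).
  rewrite Rabs_Ropp in BA. rewrite (Rabs_pos_eq t) in BA; [|lra].
  destruct i as [|j]; [lia|].
  destruct (Q_props j) as [q1 [q2 q3]].
  assert (HQ : 1 <= IZR (Qf a (S j)) <= IZR n) by (split; apply IZR_le; lia).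
  destruct (Z.eq_dec (p * Qf a (S j)) (n * Pf a (S j))) as [Eq|Neq].
  - apply (f_equal IZR) in Eq. rewrite !mult_IZR in Eq.
    assert (Et : IZR (Qf a (S j)) * t = IZR n * (- e (S j))) by (unfold t, e; nra).
    assert (Eneg : e (S j) < 0).
    { destruct (Rlt_le_dec (e (S j)) 0) as [h|h]; [exact h|]. nra. }
    destruct (Nat.even j) eqn:Ej.
    + pose proof (e_pos_even j Ej). lra.
    + assert (Ev : Nat.even (S j) = true) by (rewrite Nat.even_succ, <- Nat.negb_even, Ej; reflexivity).
      apply Nat.even_spec in Ev. destruct Ev as [k Hk].
      assert (Hk1 : (1 <= k)%nat) by lia.
      pose proof (heven k Hk1) as Hb. rewrite <- Hk in Hb.
      assert (Hb' : INR (a (S j)) <= 3 * A - 2).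
      { unfold A. pose proof (hapos 0). apply le_INR in Hb. rewrite minus_INR in Hb by lia. rewrite mult_INR in Hb.
        simpl in Hb. lra. }
      pose proof (e_sign j) as Es. unfold sgn in Es. rewrite Ej in Es.
      pose proof (z_lt (S j)) as Zl.
      pose proof (z_pos (S j)) as Zp.
      set (E := - e (S j)) in *.
      set (Q1 := IZR (Qf a (S j))) in *. set (Q0 := IZR (Qf a j)) in *.
      assert (HQ0 : 0 <= Q0 <= Q1) by (unfold Q0, Q1; split; apply IZR_le; lia).
      set (zz := z (S j)) in *.
      assert (Hd : E * (Q1 * zz + Q0) = 1) by (unfold E; simpl in Es; lra).
      assert (Hd2 : Q1 * zz + Q0 < 3 * A * Q1) by nra.
      assert (HE : 0 < E) by (unfold E; lra).
      assert (HQE : 1 < 3 * A * Q1 * E) by nra.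
      assert (Hnt2 : Q1 * E <= IZR n * t) by nra.
      nra.
  - assert (Hz : (p * Qf a (S j) - n * Pf a (S j))%Z <> 0%Z) by lia.
    pose proof (abs_int_ge1 _ Hz) as H1.
    rewrite minus_IZR, !mult_IZR in H1.
    replace (IZR p * IZR (Qf a (S j)) - IZR n * IZR (Pf a (S j)))
      with (IZR (Qf a (S j)) * t + IZR n * e (S j)) in H1 by (unfold t, e; ring).
    pose proof (Rabs_triang (IZR (Qf a (S j)) * t) (IZR n * e (S j))) as T.
    rewrite !Rabs_mult in T. rewrite (Rabs_pos_eq (IZR n)) in T by lra.
    rewrite (Rabs_pos_eq (IZR (Qf a (S j)))) in T by lra.
    rewrite (Rabs_pos_eq t) in T by lra.
    nra.
Qed.

End Conv.

Lemma pos_deriv (f f' : R -> R) : f 0 = 0 -> (forall t, derivable_pt_lim f t (f' t)) ->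
  (forall t, 0 < t -> 0 < f' t) -> forall x, 0 < x -> 0 < f x.
Proof.
  intros H0 Hd Hp x Hx.
  destruct (MVT_cor2 f f' 0 x Hx (fun c _ => Hd c)) as [c [Hc1 Hc2]].
  pose proof (Hp c (proj1 Hc2)). nra.
Qed.

Lemma der (f : R -> R) t l : is_derive f t l -> derivable_pt_lim f t l.
Proof. intros H. apply is_derive_Reals. exact H. Qed.

Lemma ineqA x : 0 < x -> (exp x - 1) * (2 - x) < 2 * x.
Proof.
  intros Hx.
  assert (H1 : forall t, 0 < t -> 0 < 1 - exp t * (1 - t)).
  { apply pos_deriv with (f' := fun t => exp t * t).
    - simpl; rewrite exp_0; ring.
    - intros t. apply der. auto_derive; [auto|]. ring.
    - intros t Ht. pose proof (exp_pos t). nra. }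
  assert (H2 : 0 < 2 * x - (exp x - 1) * (2 - x)).
  { apply (pos_deriv (fun t => 2 * t - (exp t - 1) * (2 - t)) (fun t => 1 - exp t * (1 - t))).
    - simpl. simpl; rewrite exp_0; ring.
    - intros t. apply der. auto_derive; [auto|]. ring.
    - exact H1.
    - exact Hx. }
  lra.
Qed.

Lemma ineqB x : 0 < x -> 12 * x < (exp x - 1) * (x * x - 6 * x + 12).
Proof.
  intros Hx.
  assert (H1 : forall t, 0 < t -> 0 < exp t * (t * t - 2 * t + 2) - 2).
  { apply (pos_deriv (fun t => exp t * (t * t - 2 * t + 2) - 2) (fun t => exp t * (t * t))).
    - simpl; rewrite exp_0; ring.
    - intros t. apply der. auto_derive; [auto|]. ring.
    - intros t Ht. apply Rmult_lt_0_compat; [apply exp_pos|nra]. }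
  assert (H2 : forall t, 0 < t -> 0 < exp t * (t * t - 4 * t + 6) - 2 * t - 6).
  { apply (pos_deriv (fun t => exp t * (t * t - 4 * t + 6) - 2 * t - 6) (fun t => exp t * (t * t - 2 * t + 2) - 2)).
    - simpl; rewrite exp_0; ring.
    - intros t. apply der. auto_derive; [auto|]. ring.
    - exact H1. }
  assert (H3 : 0 < (exp x - 1) * (x * x - 6 * x + 12) - 12 * x).
  { apply (pos_deriv (fun t => (exp t - 1) * (t * t - 6 * t + 12) - 12 * t)
                     (fun t => exp t * (t * t - 4 * t + 6) - 2 * t - 6)).
    - simpl; rewrite exp_0; ring.
    - intros t. apply der. auto_derive; [auto|]. ring.
    - exact H2.
    - exact Hx. }
  lra.
Qed.

Lemma floor_up (w : R) (m : Z) : w < IZR m -> IZR m <= w + 1 -> Rfloor w = (m - 1)%Z.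
Proof. intros h1 h2. unfold Rfloor. rewrite <- (tech_up w m h1 h2). reflexivity. Qed.

Theorem mainTheorem6 (a : nat -> nat) (l : R)
  (ha0 : (1 <= a 0)%nat)
  (hapos : forall k : nat, (1 <= a k)%nat)
  (heven : forall k : nat, (1 <= k)%nat -> (a (2 * k) <= 3 * a 0 - 2)%nat)
  (hl : cf_value a l) :
  forall n : nat, ~ in_A (exp (2 / l)) n.
Proof.
  intros n [Hn Hne]. apply Hne. clear Hne.
  assert (hl' : Un_cv (fun m => cf_tail a 0 m) l) by exact hl.
  pose proof (z_gt a hapos l hl' 0) as Hl0. simpl in Hl0.
  pose proof (a_ge1 a hapos 0) as HA.
  assert (HnR : 1 <= INR n) by (apply (le_INR 1); exact Hn).
  unfold Mprime, Rpower. rewrite ln_exp.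
  set (x := / INR n * (2 / l)).
  assert (Hx : 0 < x).
  { unfold x. apply Rmult_lt_0_compat; [apply Rinv_0_lt_compat; lra|].
    unfold Rdiv. apply Rmult_lt_0_compat; [lra|apply Rinv_0_lt_compat; lra]. }
  replace (INR n / (2 / l) - / 2) with (/ x - / 2) by (unfold x; field; lra).
  set (E := exp x - 1).
  assert (HE : 0 < E) by (unfold E; pose proof (exp_ineq1 x); lra).
  set (y := / x - / 2). set (w := / E).
  assert (Hyw : y < w).
  { pose proof (ineqA x Hx) as I. fold E in I.
    assert (Eq : (y - w) * (2 * x * E) = (2 - x) * E - 2 * x) by (unfold y, w; field; lra).
    assert (0 < 2 * x * E) by nra. nra. }
  assert (Hwy : w < y + x / 12).
  { pose proof (ineqB x Hx) as I. fold E in I.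
    assert (Eq : (y + x / 12 - w) * (12 * x * E) = E * (x * x - 6 * x + 12) - 12 * x)
      by (unfold y, w; field; lra).
    assert (0 < 12 * x * E) by nra. nra. }
  destruct (archimed y) as [U1 U2].
  set (m := up y) in *.
  unfold Rfloor at 2. fold m.
  apply floor_up; [|lra].
  destruct (Rlt_le_dec w (IZR m)) as [ok|bad]; [exact ok|exfalso].
  set (nz := Z.of_nat n).
  assert (Hnz : (1 <= nz)%Z) by (unfold nz; lia).
  assert (HnzR : IZR nz = INR n) by (unfold nz; rewrite <- INR_IZR_INZ; reflexivity).
  assert (Hy : y = INR n * l / 2 - / 2) by (unfold y, x; field; lra).
  assert (Hp : IZR nz * l < IZR (2 * m + 1)).
  { rewrite HnzR, plus_IZR, mult_IZR. simpl (IZR 2). simpl (IZR 1). lra. }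
  pose proof (dioph a hapos l hl' heven nz (2 * m + 1) Hnz Hp) as D.
  rewrite HnzR, plus_IZR, mult_IZR in D. simpl (IZR 2) in D. simpl (IZR 1) in D.
  set (t := 2 * IZR m + 1 - INR n * l) in *.
  assert (Ht : t < x / 6) by (unfold t; lra).
  assert (Ht0 : 0 < t) by (unfold t; lra).
  assert (Hxn : x * INR n * l = 2) by (unfold x; field; lra).
  (* 3 a0 n t >= 1, but n t < n x / 6 = 1/(3 l) *)
  assert (H1 : INR n * t * (3 * l) < 1).
  { assert (INR n * t * (3 * l) < INR n * (x / 6) * (3 * l)).
    { apply Rmult_lt_compat_r; [lra|]. apply Rmult_lt_compat_l; lra. }
    nra. }
  assert (H2 : 3 * INR (a 0%nat) * (INR n * t) < 3 * l * (INR n * t)).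
  { apply Rmult_lt_compat_r; [nra|lra]. }
  nra.
Qed.
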